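(* Let $X$ and $\varepsilon$ be independent real random variables and $Y=X+\varepsilon$. Suppose $P(X\in\{\xi_\ell\}_{\ell\in\mathbb{N}_0})=1$ for real numbers $\xi_0<\xi_1<\cdots$, $F_X\{\xi_0\}>0$, and there is $z_0\in\mathbb{R}$ with $F_\varepsilon(z_0)=0$. Choose $\{\zeta_\ell\}_{\ell\in\mathbb{N}_0}\subset\mathbb{R}$ with $\xi_\ell<\zeta_\ell\le\xi_{\ell+1}$ and $F_\varepsilon(z_0+\zeta_\ell-\xi_\ell)>0$ for each $\ell\in\mathbb{N}_0$. Define $p_X(\ell):=F_X\{\xi_\ell\}\mathbf 1_{\mathbb{N}_0}(\ell)$, $$\ddot P_{\varepsilon,+}(\ell,z):=\Big(\delta_{z,0}-\frac{F_\varepsilon(z_0+\zeta_\ell-\xi_{\ell-z})}{F_\varepsilon(z_0+\zeta_\ell-\xi_\ell)}\mathbf 1_{\{0,\dots,\ell\}}(z)\Big)\mathbf 1_{\mathbb{N}_0}(\ell),\qquad \ddot P_Y(\ell):=\frac{F_Y(z_0+\zeta_\ell)}{F_\varepsilon(z_0+\zeta_\ell-\xi_\ell)}\mathbf 1_{\mathbb{N}_0}(\ell).$$ Then $p_X(\ell)=\sum_{z\in\mathbb{Z}}\ddot P_Y(\ell-z)\,\beta\{\ddot P_{\varepsilon,+}\}(\ell,z)$ for all $\ell\in\mathbb{Z}$. In particular, if there exist $s>0$ and $0<\sigma\le s$ with $\xi_\ell=\xi_0+s\ell$ for all $\ell\in\mathbb{N}_0$ and $F_\varepsilon(z_0+\sigma)>0$,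 then, taking $\zeta_\ell:=\xi_0+\sigma+s\ell$ and $\ddot U_{\varepsilon,+}(z):=\ddot P_{\varepsilon,+}(z,z)$, $$F_X(\xi)=(\Theta\{\ddot P_Y\}*\Theta\{\gamma\{\ddot U_{\varepsilon,+}\}\})\Big(\frac{\xi-\xi_0}{s}\Big)\qquad(\xi\in\mathbb{R}).$$
   Context: $F_B$ is the distribution function of $B$, $F_B\{x\}:=P(B=x)$. $\delta_{z,0}=1$ if $z=0$, else $0$. For a double sequence $\ddot p(\ell,z)$ vanishing for $z<0$: $\ddot p^{*0}(\ell,z):=\delta_{z,0}$, $\ddot p^{*j}(\ell,z):=\sum_{z_1\in\mathbb{Z}}\ddot p(\ell,z_1)\ddot p^{*(j-1)}(\ell-z_1,z-z_1)$, and $\beta\{\ddot p\}(\ell,z):=\sum_{j=0}^{z}\ddot p^{*j}(\ell,z)$ (empty sum $=0$). For a single sequence $\ddot u$ vanishing on negative integers: $\ddot u^{*0}(z):=\delta_{z,0}$, $\ddot u^{*j}(z):=\sum_y\ddot u(z-y)\ddot u^{*(j-1)}(y)$, $\gamma\{\ddot u\}(z):=\sum_{j=0}^z\ddot u^{*j}(z)$. For a sequence $p$ vanishing on negative integers, $\Theta\{p\}(\xi):=\sum_{z=-\infty}^{\lfloor\xi\rfloor}p(z)$, and $(\Theta\{p\}*\Theta\{q\})(x):=\sum_{z\in\mathbb{Z}}\Theta\{p\}(x-z)q(z)$. *)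

(* Defs.v *)
From HB Require Import structures.
From mathcomp Require Import all_boot all_order all_algebra.
From mathcomp Require Import all_classical all_reals all_analysis.
Set Implicit Arguments. Unset Strict Implicit. Unset Printing Implicit Defensive.
Import Order.TTheory GRing.Theory Num.Theory.
Import numFieldNormedType.Exports.
Local Open Scope classical_set_scope.
Local Open Scope ring_scope.

Section Defs.
Variable R : realType.

Definition zsum (f : int -> R) : R :=
  limn (fun N : nat => \sum_(i < (2 * N).+1) f (i%:Z - N%:Z)).

Definition zsum_le (f : int -> R) (m : int) : R :=
  limn (fun N : nat => \sum_(i < N) f (m - i%:Z)).

Definition kdelta (z : int) : R := if z == 0 then 1 else 0.

Fixpoint dstar (p : int -> int -> R) (j : nat) (l z : int) : R :=
  match j with
  | 0 => kdelta z
  | j'.+1 => zsum (fun z1 => p l z1 * dstar p j' (l - z1) (z - z1))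
  end.

Definition beta (p : int -> int -> R) (l z : int) : R :=
  if (0 <= z) then \sum_(j < (absz z).+1) dstar p j l z else 0.

Fixpoint sstar (u : int -> R) (j : nat) (z : int) : R :=
  match j with
  | 0 => kdelta z
  | j'.+1 => zsum (fun y => u (z - y) * sstar u j' y)
  end.

Definition gamma (u : int -> R) (z : int) : R :=
  if (0 <= z) then \sum_(j < (absz z).+1) sstar u j z else 0.

Definition Theta (p : int -> R) (xi : R) : R := zsum_le p (Num.floor xi).

Definition Theta_conv (p q : int -> R) (x : R) : R :=
  zsum (fun z => Theta p (x - z%:~R) * q z).

End Defs.

Section Prob.
Context {d : measure_display} {T : measurableType d} {R : realType}.
Variable P : probability T R.

Definition distF (B : T -> R) (x : R) : R := fine (P [set w | B w <= x]).
Definition atomF (B : T -> R) (x : R) : R := fine (P [set w | B w = x]).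

Definition indep_RV (X Y : T -> R) : Prop :=
  forall A B : set R, measurable A -> measurable B ->
    P (X @^-1` A `&` Y @^-1` B) = (P (X @^-1` A) * P (Y @^-1` B))%E.
End Prob.

Section Objects.
Variable R : realType.
Variables (FX1 : R -> R) (Feps FY : R -> R) (xi zeta : nat -> R) (z0 : R).

Definition p_X (l : int) : R := if 0 <= l then FX1 (xi (absz l)) else 0.

Definition Peps_plus (l z : int) : R :=
  if 0 <= l then
    kdelta R z -
    (if (0 <= z) && (z <= l) then
       Feps (z0 + zeta (absz l) - xi (absz (l - z))) /
       Feps (z0 + zeta (absz l) - xi (absz l))
     else 0)
  else 0.

Definition P_Y (l : int) : R :=
  if 0 <= l then
    FY (z0 + zeta (absz l)) / Feps (z0 + zeta (absz l) - xi (absz l))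
  else 0.

Definition U_eps_plus (z : int) : R := Peps_plus z z.
End Objects.

(* Main.v *)
Require Import Defs.
From HB Require Import structures.
From mathcomp Require Import all_boot all_order all_algebra.
From mathcomp Require Import all_classical all_reals all_analysis.
From mathcomp Require Import zify ring lra.
Import Order.TTheory GRing.Theory Num.Theory.
Import numFieldNormedType.Exports.
Local Open Scope classical_set_scope.
Local Open Scope ring_scope.

Section Comb.
Variable R : realType.

Lemma limn_eventually {u : nat -> R} {S : R} (M : nat) :
  (forall N, (M <= N)%N -> u N = S) -> limn u = S.
Proof.
move=> h; apply: lim_near_cst => //.
by exists M => // N /= hN; apply: h.
Qed.

Lemma sum_widen0 (F : nat -> R) m N : (m <= N)%N ->
  (forall i, (m <= i)%N -> (i < N)%N -> F i = 0) ->
  \sum_(i < N) F i = \sum_(i < m) F i.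
Proof.
move=> hmN h; rewrite (big_ord_widen N F hmN) [RHS]big_mkcond /=.
apply: eq_bigr => i _; case: ifP => // /negbT; rewrite -leqNgt => hi.
by rewrite h.
Qed.

Lemma zsum_fin (f : int -> R) (n : nat) :
  (forall z, z < 0 -> f z = 0) -> (forall z, n%:Z < z -> f z = 0) ->
  zsum f = \sum_(i < n.+1) f i%:Z.
Proof.
move=> h0 h1; rewrite /zsum; apply: (limn_eventually n) => N hN.
have -> : (2 * N).+1 = (N + (n.+1 + (N - n)))%N by lia.
rewrite big_split_ord /= big_split_ord /=.
rewrite big1 ?add0r; last first.
  by move=> i _; apply: h0; have := ltn_ord i; lia.
rewrite [X in _ + X]big1 ?addr0; last first.
  by move=> i _; apply: h1; lia.
by apply: eq_bigr => i _; congr f; lia.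
Qed.

Lemma zsum_eq0 (f : int -> R) : (forall z, f z = 0) -> zsum f = 0.
Proof.
by move=> h; rewrite (@zsum_fin f 0) // big1.
Qed.

Lemma zsum_finN (f : int -> R) (n N : nat) :
  (forall z, z < 0 -> f z = 0) -> (forall z, n%:Z < z -> f z = 0) ->
  (n < N)%N ->
  zsum f = \sum_(i < N) f i%:Z.
Proof.
move=> h0 h1 hN; rewrite (zsum_fin _ _ h0 h1); symmetry.
by apply: (@sum_widen0 (fun i : nat => f i%:Z) n.+1) => // i hi _; apply: h1; lia.
Qed.

Lemma zsum_le_fin (p : int -> R) (n : nat) :
  (forall z, z < 0 -> p z = 0) ->
  zsum_le p n%:Z = \sum_(i < n.+1) p (n%:Z - i%:Z).
Proof.
move=> h0; rewrite /zsum_le; apply: (limn_eventually n.+1) => N hN.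
by apply: (@sum_widen0 (fun i : nat => p (n%:Z - i%:Z)) n.+1) => // i hi _; apply: h0; lia.
Qed.

Lemma zsum_le_neg (p : int -> R) (m : int) :
  (forall z, z < 0 -> p z = 0) -> m < 0 -> zsum_le p m = 0.
Proof.
move=> h0 hm; rewrite /zsum_le; apply: (limn_eventually 0) => N _.
by rewrite big1 // => i _; apply: h0; lia.
Qed.


Definition Qok (Q : int -> int -> R) :=
  (forall l z, z <= 0 -> Q l z = 0) /\ (forall l z, l < z -> Q l z = 0).

Lemma dstar_lt Q : Qok Q -> forall j l z, z < j%:Z -> dstar Q j l z = 0.
Proof.
move=> [hQ1 hQ2]; elim=> [|j IH] l z hz /=.
  by rewrite /kdelta; case: eqP => // hz0; lia.
apply: zsum_eq0 => z1.
have [h|h] := lerP z1 0; first by rewrite hQ1 // mul0r.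
by rewrite IH ?mulr0 //; lia.
Qed.

Lemma dstarS_fin Q : Qok Q -> forall j (n : nat) z,
  dstar Q j.+1 n%:Z z = \sum_(i < n.+1) Q n%:Z i%:Z * dstar Q j (n%:Z - i%:Z) (z - i%:Z).
Proof.
move=> [hQ1 hQ2] j n z /=.
apply: zsum_fin => z1 hz1.
  by rewrite hQ1 ?mul0r //; lia.
by rewrite hQ2 ?mul0r.
Qed.

Lemma beta_sum Q : Qok Q -> forall l z (N : nat), z < N%:Z ->
  beta Q l z = \sum_(j < N) dstar Q j l z.
Proof.
move=> hQ l z N hz; rewrite /beta; case: ifP => hz0.
  symmetry; apply: (@sum_widen0 (fun j => dstar Q j l z) (absz z).+1).
    lia.
  by move=> i hi _; apply: dstar_lt => //; lia.
by rewrite big1 // => j _; apply: dstar_lt => //; lia.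
Qed.

Lemma beta_rec Q : Qok Q -> forall (n : nat) z,
  beta Q n%:Z z = kdelta R z + \sum_(i < n.+1) Q n%:Z i%:Z * beta Q (n%:Z - i%:Z) (z - i%:Z).
Proof.
move=> hQ n z.
rewrite (@beta_sum Q hQ n z (absz z).+2); last by lia.
rewrite big_ord_recl /=; congr (_ + _).
have E : forall i : nat, zsum (fun z1 => Q n%:Z z1 * dstar Q i (n%:Z - z1) (z - z1))
  = \sum_(i0 < n.+1) Q n%:Z i0%:Z * dstar Q i (n%:Z - i0%:Z) (z - i0%:Z).
  by move=> i; exact: (dstarS_fin _ hQ i n z).
under eq_bigr do rewrite add0n E.
rewrite exchange_big /=; apply: eq_bigr => i _.
rewrite -mulr_sumr; congr (_ * _).
by rewrite (@beta_sum Q hQ _ _ (absz z).+1) //; lia.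
Qed.

Lemma inversion_nat Q (p y : int -> R) : Qok Q ->
  (forall l, l < 0 -> y l = 0) ->
  (forall n : nat, p n%:Z = y n%:Z + \sum_(i < n.+1) Q n%:Z i%:Z * p (n%:Z - i%:Z)) ->
  forall n : nat, p n%:Z = \sum_(k < n.+1) y (n%:Z - k%:Z) * beta Q n%:Z k%:Z.
Proof.
move=> hQ hy hrec; elim/ltn_ind => n IH.
under eq_bigr do rewrite (beta_rec _ hQ) mulrDr.
rewrite big_split /= big_ord_recl /= big1 ?addr0; last first.
  by move=> i _; rewrite /kdelta /= mulr0.
rewrite /kdelta /= mulr1 {1}hrec; congr (_ + _).
under eq_bigr do rewrite mulr_sumr.
rewrite exchange_big /=; apply: eq_bigr => i _.
have [->|hi] := eqVneq (nat_of_ord i) 0%N.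
  by rewrite (proj1 hQ) // mul0r big1 // => k _; rewrite mul0r mulr0.
have hin : (i <= n)%N by have := ltn_ord i; lia.
move: (nat_of_ord i) hi hin => {i} i hi hin.
rewrite (subzn hin) (IH (n - i)%N) ?mulr_sumr; last by lia.
have -> : n.+1 = (i + (n - i).+1)%N by lia.
rewrite [RHS]big_split_ord /= [X in _ = X + _]big1 ?add0r; last first.
  move=> k _; rewrite /beta; case: ifP => hk; last by rewrite !mulr0.
  by have := ltn_ord k; lia.
apply: eq_bigr => k _; rewrite mulrCA; congr (_ * (_ * _)).
  by congr y; lia.
by congr beta; lia.
Qed.


Lemma sum_rev (F : nat -> R) n :
  \sum_(i < n.+1) F i = \sum_(i < n.+1) F (n - i)%N.
Proof.
by rewrite (reindex_inj rev_ord_inj) /=; apply: eq_bigr => i _; rewrite subSS.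
Qed.

Lemma sstar_lt (U : int -> R) : (forall z, z <= 0 -> U z = 0) ->
  forall j z, z < j%:Z -> sstar U j z = 0.
Proof.
move=> hU; elim=> [|j IH] z hz /=.
  by rewrite /kdelta; case: eqP => // hz0; lia.
apply: zsum_eq0 => y.
have [h|h] := lerP (z - y) 0; first by rewrite hU // mul0r.
by rewrite IH ?mulr0 //; lia.
Qed.

Lemma sstarS (U : int -> R) j z :
  sstar U j.+1 z = zsum (fun y => U (z - y) * sstar U j y).
Proof. by []. Qed.

Lemma dstar_sstar Q (U : int -> R) : Qok Q -> (forall z, z <= 0 -> U z = 0) ->
  (forall k z1 : nat, (z1 <= k)%N -> Q k%:Z z1%:Z = U z1%:Z) ->
  forall j (k z : nat), (z <= k)%N -> dstar Q j k%:Z z%:Z = sstar U j z%:Z.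
Proof.
move=> hQ hU hQU; elim=> [|j IH] k z hzk; first by [].
rewrite (dstarS_fin _ hQ).
have -> : sstar U j.+1 z%:Z = \sum_(i < z.+1) U (z%:Z - i%:Z) * sstar U j i%:Z.
  rewrite sstarS; apply: zsum_fin => y hy.
    by rewrite /= (sstar_lt _ hU) ?mulr0 //; lia.
  by rewrite /= hU ?mul0r //; lia.
rewrite (@sum_widen0 (fun i : nat => Q k%:Z i%:Z * dstar Q j (k%:Z - i%:Z) (z%:Z - i%:Z)) z.+1); last 2 first.
- lia.
- by move=> i hi _; rewrite (dstar_lt _ hQ) ?mulr0 //; lia.
rewrite (sum_rev (fun i : nat => U (z%:Z - i%:Z) * sstar U j i%:Z)); apply: eq_bigr => i _.
have hi : (i <= z)%N by have := ltn_ord i; lia.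
rewrite hQU; last by lia.
rewrite (subzn (leq_trans hi hzk)) (subzn hi) IH; last by lia.
by congr (U _ * _); lia.
Qed.

Lemma beta_gamma Q (U : int -> R) : Qok Q -> (forall z, z <= 0 -> U z = 0) ->
  (forall k z1 : nat, (z1 <= k)%N -> Q k%:Z z1%:Z = U z1%:Z) ->
  forall (k z : nat), (z <= k)%N -> beta Q k%:Z z%:Z = gamma U z%:Z.
Proof.
move=> hQ hU hQU k z hzk; rewrite /beta /gamma /=.
by apply: eq_bigr => j _; apply: dstar_sstar.
Qed.


Lemma floor_subz (u : R) (z : int) : Num.floor (u - z%:~R) = Num.floor u - z.
Proof.
have -> : u - z%:~R = u + (- z)%:~R by rewrite mulrNz.
by rewrite floorDrz ?intr_int // intrKfloor.
Qed.

Lemma conv_neg (y g : int -> R) (u : R) :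
  (forall l, l < 0 -> y l = 0) -> (forall z, z < 0 -> g z = 0) ->
  Num.floor u < 0 -> Theta_conv y g u = 0.
Proof.
move=> hy hg hu; apply: zsum_eq0 => z.
have [hz|hz] := ltrP z 0; first by rewrite hg ?mulr0.
by rewrite /Theta floor_subz zsum_le_neg ?mul0r //; lia.
Qed.

Lemma conv_final (y g : int -> R) (a : nat -> R) (n : nat) (u : R) :
  (forall l, l < 0 -> y l = 0) -> (forall z, z < 0 -> g z = 0) ->
  (forall k : nat, a k = \sum_(z < k.+1) y (k%:Z - z%:Z) * g z%:Z) ->
  Num.floor u = n%:Z ->
  \sum_(k < n.+1) a k = Theta_conv y g u.
Proof.
move=> hy hg ha hu.
rewrite /Theta_conv (zsum_fin _ n); last 2 first.
- by move=> z hz; rewrite hg ?mulr0.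
- by move=> z hz; rewrite /Theta floor_subz zsum_le_neg ?mul0r //; lia.
have E : forall k : 'I_n.+1, a k = \sum_(z < n.+1) y (k%:Z - z%:Z) * g z%:Z.
  move=> k; rewrite ha (@sum_widen0 (fun z : nat => y (k%:Z - z%:Z) * g z%:Z) k.+1 n.+1) // => i hi hi2.
  by rewrite hy ?mul0r //; lia.
under eq_bigr => k _ do rewrite E.
rewrite exchange_big /=; apply: eq_bigr => z _.
have hz : (z <= n)%N by have := ltn_ord z; lia.
rewrite -mulr_suml /Theta floor_subz hu (subzn hz) zsum_le_fin //; congr (_ * _).
rewrite (sum_rev (fun k : nat => y (k%:Z - z%:Z))).
rewrite (@sum_widen0 (fun k : nat => y ((n - k)%N%:Z - z%:Z)) (n - z).+1); last 2 first.
- lia.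
- by move=> i hi hi2; rewrite hy //; lia.
by apply: eq_bigr => k _; congr y; have := ltn_ord k; lia.
Qed.

End Comb.

Section Prob.
Context (d : measure_display) (T : measurableType d) (R : realType)
  (P : probability T R).

Lemma xi_lt (xi : nat -> R) : (forall l, xi l < xi l.+1) ->
  forall i j, (i < j)%N -> xi i < xi j.
Proof.
move=> h i; elim=> [//|j IH] hij.
have [->|hne] := eqVneq i j; first exact: h.
by apply: lt_trans (h j); apply: IH; lia.
Qed.

Lemma xi_inj (xi : nat -> R) : (forall l, xi l < xi l.+1) -> injective xi.
Proof.
move=> h i j hij; have [lt|gt|//] := ltngtP i j.
- by have := xi_lt _ h _ _ lt; rewrite hij ltxx.
- by have := xi_lt _ h _ _ gt; rewrite hij ltxx.
Qed.

Lemma le_set_meas (f : T -> R) (r : R) :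
  measurable_fun setT f -> measurable [set w | f w <= r].
Proof.
move=> mf.
have -> : [set w | f w <= r] = setT `&` f @^-1` [set` `]-oo, r]].
  apply/seteqP; split => w /=.
    by move=> h; split => //; rewrite in_itv /= h.
  by move=> [_]; rewrite in_itv /=.
exact: (mf measurableT _ (measurable_itv _)).
Qed.

Lemma le_set_measR (r : R) : measurable [set y : R | y <= r].
Proof.
have -> : [set y : R | y <= r] = [set` `]-oo, r]].
  by apply/seteqP; split => w /=; rewrite in_itv /=.
exact: measurable_itv.
Qed.

Lemma fine_null (A : set T) : measurable A -> fine (P A) = 0 -> P A = 0.
Proof.
move=> mA h; rewrite -[P A]fineK ?h //.
exact: fin_num_measure.
Qed.

Lemma decomp (X : {RV P >-> R}) (xi : nat -> R) (A E : set T) (n : nat) :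
  (forall l, xi l < xi l.+1) ->
  P (X @^-1` range xi) = 1%E ->
  measurable A -> measurable E -> P E = 0 ->
  (forall w, A w -> forall k, (n < k)%N -> X w = xi k -> E w) ->
  P A = (\sum_(k < n.+1) P (A `&` [set w | X w = xi k]))%E.
Proof.
move=> hxi hS mA mE hE hAE.
have mS : measurable (X @^-1` range xi).
  apply: measurable_funPTI.
  have -> : range xi = \bigcup_k [set xi k].
    by apply/seteqP; split => [r [k _ <-]|r [k _ ->]]; [exists k|exists k].
  by apply: bigcupT_measurable => k; exact: measurable_set1.
have mF : forall k, measurable (A `&` [set w | X w = xi k]).
  move=> k; apply: measurableI => //.
  exact: (measurable_funPTI X (measurable_set1 (xi k))).
set C := \big[setU/set0]_(k < n.+1) (A `&` [set w | X w = xi k]).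
have mC : measurable C by apply: bigsetU_measurable => k _.
have CA : C `<=` A.
  by rewrite /C -(bigcup_mkord n.+1 (fun k => A `&` [set w | X w = xi k])) => w [k _ []].
have hN : P (~` (X @^-1` range xi) `|` E) = 0.
  apply/eqP; rewrite eq_le measure_ge0 andbT.
  apply: le_trans (measureU2 P (measurableC mS) mE) _.
  change (P (~` (X @^-1` range xi)) + P E <= 0)%E.
  by rewrite (probability_setC P mS) hS hE subee // adde0.
have h1 : P A = (P (A `\` C) + P (A `&` C))%E := measureDI P mA mC.
have h2 : P (A `\` C) = 0.
  apply: (@subset_measure0 _ _ _ P (A `\` C) (~` (X @^-1` range xi) `|` E)) => //.
  - exact: measurableD.
  - by apply: measurableU => //; exact: measurableC.
  - move=> w [Aw nCw].
    have [[k _ Xk]|nS] := pselect ((X @^-1` range xi) w); last by left.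
    right; apply: (hAE w Aw k) => //.
    rewrite ltnNge; apply/negP => hk; apply: nCw.
    by rewrite /C -(bigcup_mkord n.+1 (fun k => A `&` [set w | X w = xi k])); exists k => //=; lia.
have h3 : P C = (\sum_(k < n.+1) P (A `&` [set w | X w = xi k]))%E.
  apply: (measure_semi_additive_ord_I P (F:=fun k => A `&` [set w | X w = xi k]) (n:=n.+1) _ _ mC).
    by move=> k _.
  move=> i j _ _ [w [[_ hi] [_ hj]]].
  by apply: (xi_inj _ hxi); rewrite -hi -hj.
by rewrite h1 h2 add0e (setIidr CA) h3.
Qed.


Lemma xi_le (xi : nat -> R) : (forall l, xi l < xi l.+1) ->
  forall i j, (i <= j)%N -> xi i <= xi j.
Proof.
move=> h i j; rewrite leq_eqVlt => /orP [/eqP ->//|hij].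
exact: ltW (xi_lt _ h _ _ hij).
Qed.

Lemma distY_decomp (X eps : {RV P >-> R}) (xi : nat -> R) (z0 : R) (n : nat) (t : R) :
  indep_RV P X eps ->
  (forall l, xi l < xi l.+1) ->
  P (X @^-1` range xi) = 1%E ->
  distF P eps z0 = 0 ->
  t - xi n.+1 <= z0 ->
  distF P (fun w => X w + eps w) t =
    \sum_(k < n.+1) atomF P X (xi k) * distF P eps (t - xi k).
Proof.
move=> hind hxi hS hz0 ht.
have mE : measurable [set w | eps w <= z0] := le_set_meas _ _ (measurable_funPT eps).
have mA : measurable [set w | X w + eps w <= t].
  exact: (@le_set_meas (fun w => X w + eps w) t (measurable_realfun.measurable_funD (measurable_funPT X) (measurable_funPT eps))).
rewrite /distF (@decomp X xi _ _ n hxi hS mA mE); last 2 first.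
- exact: fine_null.
- move=> w /= hw k hk hXk.
  have := xi_le _ hxi n.+1 k hk; rewrite hXk in hw; lra.
have E k : P ([set w | X w + eps w <= t] `&` [set w | X w = xi k]) =
    (atomF P X (xi k) * distF P eps (t - xi k))%:E.
  have -> : [set w | X w + eps w <= t] `&` [set w | X w = xi k] =
      X @^-1` [set xi k] `&` eps @^-1` [set y | y <= t - xi k].
    apply/seteqP; split => w /= [h1 h2]; split => //.
      by rewrite h2 in h1; lra.
    by rewrite h1; lra.
  rewrite hind; last 2 first.
  - exact: measurable_set1.
  - exact: le_set_measR.
  rewrite EFinM /atomF /distF !fineK //.
  - exact: (fin_num_measure P _ (le_set_meas _ _ (measurable_funPT eps))).
  - exact: (fin_num_measure P _ (measurable_funPTI X (measurable_set1 (xi k)))).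
under eq_bigr do rewrite E.
by rewrite sumEFin.
Qed.

Lemma distX_decomp (X : {RV P >-> R}) (xi : nat -> R) (n : nat) (x : R) :
  (forall l, xi l < xi l.+1) ->
  P (X @^-1` range xi) = 1%E ->
  xi n <= x < xi n.+1 ->
  distF P X x = \sum_(k < n.+1) atomF P X (xi k).
Proof.
move=> hxi hS /andP [hx1 hx2].
have mA : measurable [set w | X w <= x] := le_set_meas _ _ (measurable_funPT X).
rewrite /distF (@decomp X xi _ set0 n hxi hS mA measurable0 (measure0 P)); last first.
  move=> w /= hw k hk hXk.
  have := xi_le _ hxi n.+1 k hk; rewrite hXk in hw; lra.
have E (k : 'I_n.+1) : P ([set w | X w <= x] `&` [set w | X w = xi k]) = (atomF P X (xi k))%:E.
  have -> : [set w | X w <= x] `&` [set w | X w = xi k] = [set w | X w = xi k].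
    apply/seteqP; split => w /=; first by case.
    move=> h; split => //; rewrite h.
    by apply: le_trans hx1; apply: xi_le => //; have := ltn_ord k; lia.
  rewrite /atomF fineK //.
  exact: (fin_num_measure P _ (measurable_funPTI X (measurable_set1 (xi k)))).
under eq_bigr do rewrite E.
by rewrite sumEFin.
Qed.

Lemma distX_neg (X : {RV P >-> R}) (xi : nat -> R) (x : R) :
  (forall l, xi l < xi l.+1) ->
  P (X @^-1` range xi) = 1%E ->
  x < xi 0 ->
  distF P X x = 0.
Proof.
move=> hxi hS hx.
have mA : measurable [set w | X w <= x] := le_set_meas _ _ (measurable_funPT X).
rewrite /distF (@decomp X xi _ set0 0 hxi hS mA measurable0 (measure0 P)); last first.
  move=> w /= hw k hk hXk.
  have := xi_le _ hxi 0 k (leq0n _); rewrite hXk in hw; lra.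
rewrite big_ord1.
have -> : [set w | X w <= x] `&` [set w | X w = xi 0] = set0.
  apply/seteqP; split => w //= [h1 h2]; rewrite h2 in h1.
  by have := lt_le_trans hx h1; rewrite ltxx.
by rewrite measure0.
Qed.

End Prob.


Section Objects2.
Variable R : realType.

Lemma Qok_Peps (F : R -> R) (xi zeta : nat -> R) (z0 : R) :
  (forall l, 0 < F (z0 + zeta l - xi l)) -> @Qok R (Peps_plus F xi zeta z0).
Proof.
move=> hpos; split.
- move=> l z hz; rewrite /Peps_plus; case: ifP => // hl.
  have [->|/eqP hz0] := eqVneq z 0.
    rewrite /kdelta eqxx /= hl subr0 divff ?subrr //.
    exact: lt0r_neq0 (hpos _).
  rewrite /kdelta ifF; last by apply/eqP.
  rewrite ifF ?subrr //.
  by apply/negbTE; apply/negP => /andP [h1 h2]; lia.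
- move=> l z hlz; rewrite /Peps_plus; case: ifP => // hl.
  rewrite /kdelta ifF; last by apply/eqP; lia.
  rewrite ifF ?subrr //.
  by apply/negbTE; apply/negP => /andP [h1 h2]; lia.
Qed.

Lemma PY_neg (F G : R -> R) (xi zeta : nat -> R) (z0 : R) :
  forall l, l < 0 -> P_Y F G xi zeta z0 l = 0.
Proof. by move=> l hl; rewrite /P_Y ifF //; apply/negbTE; rewrite -ltNge. Qed.

End Objects2.

Theorem corollary3 (d : measure_display) (T : measurableType d) (R : realType)
    (P : probability T R) (X eps : {RV P >-> R}) (xi : nat -> R) (z0 : R) :
  indep_RV P X eps ->
  (forall l, xi l < xi l.+1) ->
  P (X @^-1` range xi) = 1%E ->
  0 < atomF P X (xi 0) ->
  distF P eps z0 = 0 ->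
  let Y := fun w => X w + eps w in
  (forall zeta : nat -> R,
     (forall l, xi l < zeta l <= xi l.+1) ->
     (forall l, 0 < distF P eps (z0 + zeta l - xi l)) ->
     forall l : int,
       p_X (atomF P X) xi l =
       zsum (fun z => P_Y (distF P eps) (distF P Y) xi zeta z0 (l - z) *
                      beta (Peps_plus (distF P eps) xi zeta z0) l z)) /\
  (forall s sigma : R,
     0 < s -> 0 < sigma <= s ->
     (forall l, xi l = xi 0 + s * l%:R) ->
     0 < distF P eps (z0 + sigma) ->
     let zeta := fun l : nat => xi 0 + sigma + s * l%:R in
     forall x : R,
       distF P X x =
       Theta_conv (P_Y (distF P eps) (distF P Y) xi zeta z0)
                  (gamma (U_eps_plus (distF P eps) xi zeta z0))
                  ((x - xi 0) / s)).
Proof.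
move=> hind hxi hS hX0 hz0 Y.
have part1 : forall zeta : nat -> R,
     (forall l, xi l < zeta l <= xi l.+1) ->
     (forall l, 0 < distF P eps (z0 + zeta l - xi l)) ->
     forall l : int,
       p_X (atomF P X) xi l =
       zsum (fun z => P_Y (distF P eps) (distF P Y) xi zeta z0 (l - z) *
                      beta (Peps_plus (distF P eps) xi zeta z0) l z).
  move=> zeta hz hpos.
  have hQ := Qok_Peps _ _ _ _ _ hpos.
  have hy := @PY_neg R (distF P eps) (distF P Y) xi zeta z0.
  have hrec : forall n : nat, p_X (atomF P X) xi n%:Z =
      P_Y (distF P eps) (distF P Y) xi zeta z0 n%:Z +
      \sum_(i < n.+1) Peps_plus (distF P eps) xi zeta z0 n%:Z i%:Z *
                      p_X (atomF P X) xi (n%:Z - i%:Z).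
    move=> n.
    set D := distF P eps (z0 + zeta n - xi n).
    have hD : D != 0 by exact: lt0r_neq0 (hpos n).
    have E : forall i : 'I_n.+1,
        Peps_plus (distF P eps) xi zeta z0 n%:Z i%:Z * p_X (atomF P X) xi (n%:Z - i%:Z)
        = kdelta R i%:Z * atomF P X (xi (n - i)%N)
          - distF P eps (z0 + zeta n - xi (n - i)%N) / D * atomF P X (xi (n - i)%N).
      move=> i; have hi : (i <= n)%N by have := ltn_ord i; lia.
      rewrite /Peps_plus /p_X (subzn hi) /= -mulrBl; congr (_ * _).
      by rewrite ifT //; apply/andP; split => //; rewrite lez_nat.
    under eq_bigr do rewrite E.
    rewrite sumrB big_ord_recl /kdelta /= mul1r big1 ?addr0; last first.
      by move=> i _; rewrite mul0r.
    rewrite subn0 /p_X /= /P_Y /= -/D.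
    have hzn : z0 + zeta n - xi n.+1 <= z0.
      by have := hz n; move=> /andP [_ h]; lra.
    rewrite /Y (@distY_decomp _ _ _ P X eps xi z0 n _ hind hxi hS hz0 hzn) mulr_suml.
    rewrite (sum_rev _ (fun k : nat => atomF P X (xi k) * distF P eps (z0 + zeta n - xi k) / D)).
    rewrite (eq_bigr (fun i : 'I_n.+1 => distF P eps (z0 + zeta n - xi (n - i)%N) / D * atomF P X (xi (n - i)%N))); last first.
      by move=> i _; rewrite [RHS]mulrC mulrA.
    by rewrite addrCA subrr addr0.
  move=> l; have [hl|hl] := ltrP l 0.
    rewrite /p_X ifF; last by apply/negbTE; rewrite -ltNge.
    symmetry; apply: zsum_eq0 => z.
    have [hz0'|hz0'] := ltrP z 0.
      by rewrite /beta ifF ?mulr0 //; apply/negbTE; rewrite -ltNge.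
    by rewrite hy ?mul0r //; lia.
  have [n ->] : exists n : nat, l = n%:Z by exists (absz l); lia.
  rewrite (zsum_fin _ _ n); last 2 first.
  - by move=> z hz'; rewrite /beta ifF ?mulr0 //; apply/negbTE; rewrite -ltNge.
  - by move=> z hz'; rewrite hy ?mul0r //; lia.
  exact: (inversion_nat _ _ _ _ hQ hy hrec).
split; first exact: part1.
move=> s sigma hs /andP [hsig1 hsig2] hxis hFs zeta x.
have hz : forall l, xi l < zeta l <= xi l.+1.
  move=> l; rewrite /zeta (hxis l) (hxis l.+1) -addn1 natrD mulrDr mulr1.
  by apply/andP; split; lra.
have hzeta : forall l, z0 + zeta l - xi l = z0 + sigma.
  by move=> l; rewrite /zeta (hxis l); ring.
have hpos : forall l, 0 < distF P eps (z0 + zeta l - xi l).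
  by move=> l; rewrite hzeta.
have H1 := part1 zeta hz hpos.
have hQ := Qok_Peps _ _ _ _ _ hpos.
have hy := @PY_neg R (distF P eps) (distF P Y) xi zeta z0.
set Q := Peps_plus (distF P eps) xi zeta z0.
set U := U_eps_plus (distF P eps) xi zeta z0.
have hU : forall z, z <= 0 -> U z = 0 by move=> z h; exact: (proj1 hQ).
have hQU : forall k z1 : nat, (z1 <= k)%N -> Q k%:Z z1%:Z = U z1%:Z.
  move=> k z1 hk; rewrite /U /U_eps_plus /Q /Peps_plus /= subrr /= (subzn hk) /=.
  rewrite !hzeta; congr (_ - _); rewrite lexx !ifT //.
  congr (distF P eps _ / _).
  by rewrite /zeta (hxis (k - z1)%N) natrB //; ring.
have hg : forall z, z < 0 -> gamma U z = 0.
  by move=> z hz'; rewrite /gamma ifF //; apply/negbTE; rewrite -ltNge.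
have [hu|hu] := ltrP (Num.floor ((x - xi 0) / s)) 0.
  rewrite conv_neg //.
  apply: (@distX_neg _ _ _ P X xi x hxi hS).
  move: hu; rewrite floor_lt0 ltr_pdivrMr // mul0r; lra.
have [n hn] : exists n : nat, Num.floor ((x - xi 0) / s) = n%:Z.
  by exists (absz (Num.floor ((x - xi 0) / s))); lia.
rewrite -(@conv_final R _ _ (fun k => atomF P X (xi k)) n) //.
- apply: (@distX_decomp _ _ _ P X xi n x hxi hS).
  have h1 := floor_le ((x - xi 0) / s).
  have h2 := floorD1_gt ((x - xi 0) / s).
  rewrite hn in h1 h2.
  have e1 : (n%:Z)%:~R = n%:R :> R by [].
  have e2 : ((n%:Z + 1)%:~R) = n%:R + 1 :> R by rewrite intrD e1.
  rewrite e1 ler_pdivlMr // in h1.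
  rewrite e2 ltr_pdivrMr // in h2.
  rewrite (hxis n) (hxis n.+1) -addn1 natrD /=.
  by apply/andP; split; lra.
- move=> k; have := H1 k; rewrite /p_X /= => ->.
  rewrite (zsum_fin _ _ k); last 2 first.
  + by move=> z hz'; rewrite /beta ifF ?mulr0 //; apply/negbTE; rewrite -ltNge.
  + by move=> z hz'; rewrite hy ?mul0r //; lia.
  apply: eq_bigr => z _; congr (_ * _).
  by apply: beta_gamma => //; have := ltn_ord z; lia.
Qed.
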